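(* Let $k\ge 2$ and let $K_{n_1,\ldots,n_k}$ be the complete $k$-partite graph with parts $V_1,\ldots,V_k$, where $n_1=|V_1|\ge n_2=|V_2|\ge\cdots\ge n_k=|V_k|\ge 1$. Then $$\omega(\mathrm{CUT}(K_{n_1,n_2,\ldots,n_k}))\ge 2^{n_2-1}.$$
   Context: For an undirected graph $G=(V,E)$ and $S\subseteq V$, $\delta(S)\subseteq E$ denotes the set of edges with exactly one endpoint in $S$, and $\mathbf v(S)\in\{0,1\}^{E}$ is its incidence vector ($v(S)_e=1$ iff $e\in\delta(S)$). The cut polytope is $\mathrm{CUT}(G)=\operatorname{conv}\{\mathbf v(S):S\subseteq V\}\subset\mathbb R^{E}$. The 1-skeleton of a polytope is the graph whose vertices are the polytope's vertices and whose edges are its one-dimensional faces; $\omega$ denotes its clique number. *)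

(* Defs.v *)
From HB Require Import structures.
From mathcomp Require Import all_boot all_order all_algebra.
Set Implicit Arguments. Unset Strict Implicit. Unset Printing Implicit Defensive.
Import Order.TTheory GRing.Theory Num.Theory.
Local Open Scope ring_scope.

Section Cut.
Variables (R : realFieldType) (T : finType).

(* Points of R^E are represented as finite functions on 2-subsets of T;
   coordinates outside the edge set E are always 0 for points of CUT(G). *)
Local Notation point := {ffun {set T} -> R}.

Definition cutvec (E : {set {set T}}) (S : {set T}) : point :=
  [ffun e => if (e \in E) && (#|e :&: S| == 1%N) then 1 else 0].

Definition in_cut (E : {set {set T}}) (x : point) : Prop :=
  exists w : {ffun {set T} -> R},
    (forall S, 0 <= w S) /\ \sum_S w S = 1 /\
    (forall e, x e = \sum_S w S * cutvec E S e).

Definition dot (c x : point) : R := \sum_e c e * x e.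

Definition is_face (E : {set {set T}}) (F : point -> Prop) : Prop :=
  exists (c : point) (d : R),
    (forall x, in_cut E x -> dot c x <= d) /\
    (forall x, F x <-> (in_cut E x /\ dot c x = d)).

Definition is_vertex E (v : point) : Prop := is_face E (fun x => x = v).

Definition segment (u w x : point) : Prop :=
  exists t : R, 0 <= t /\ t <= 1 /\ (forall e, x e = (1 - t) * u e + t * w e).

Definition adjacent E (u w : point) : Prop :=
  [/\ is_vertex E u, is_vertex E w, u <> w & is_face E (segment u w)].

Definition skeleton_clique_ge E (m : nat) : Prop :=
  exists s : seq point,
    [/\ uniq s, size s = m, (forall v, v \in s -> is_vertex E v) &
        (forall u w, u \in s -> w \in s -> u <> w -> adjacent E u w)].

End Cut.

Definition multipartite_edges (T : finType) (k : nat) (p : T -> 'I_k)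
  : {set {set T}} :=
  [set e : {set T} | [exists x, exists y, (p x != p y) && (e == [set x; y])]].

(* Main.v *)
Require Import Defs.
From HB Require Import structures.
From mathcomp Require Import all_boot all_order all_algebra.
From mathcomp Require Import lra zify.
Import Order.TTheory GRing.Theory Num.Theory.
Set Implicit Arguments. Unset Strict Implicit. Unset Printing Implicit Defensive.

Section Gen.
Variables (R : realFieldType) (T : finType) (E : {set {set T}}).
Local Open Scope ring_scope.
Local Notation point := {ffun {set T} -> R}.
Local Notation cv := (@cutvec R T E).

Definition cb (S : {set T}) (e : {set T}) : bool := (e \in E) && (#|e :&: S| == 1%N).

Lemma cvE S e : cv S e = if cb S e then 1 else 0.
Proof. by rewrite ffunE. Qed.

Definition cmax (S S' : {set T}) : point :=
  [ffun e => if (e \in E) && (cb S e == cb S' e) then (if cb S e then 1 else -1) else 0].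

Lemma term_le S S' U e : cmax S S' e * cv U e <= cmax S S' e * cv S e.
Proof.
rewrite !ffunE /cb; case: (e \in E); case: (#|e :&: S| == 1%N);
  case: (#|e :&: S'| == 1%N); case: (#|e :&: U| == 1%N) => /=; rewrite ?mulr1 ?mulr0 ?mul1r ?mulN1r; lra.
Qed.

Lemma term_eq S S' U e : cmax S S' e * cv U e = cmax S S' e * cv S e ->
  e \in E -> cb S e = cb S' e -> cb U e = cb S e.
Proof.
move=> H He; move: H; rewrite !ffunE /cb He /=; case: (#|e :&: S| == 1%N);
  case: (#|e :&: S'| == 1%N); case: (#|e :&: U| == 1%N) => //= H _; exfalso;
  move: H; rewrite ?mulr1 ?mulr0 ?mul1r ?mulN1r; lra.
Qed.

Lemma dot_cut (c x : point) (w : {ffun {set T} -> R}) :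
  (forall e, x e = \sum_S w S * cv S e) -> dot c x = \sum_S w S * dot c (cv S).
Proof.
move=> Hx; rewrite /dot.
under eq_bigr do rewrite Hx mulr_sumr.
rewrite exchange_big; apply: eq_bigr => S _; rewrite mulr_sumr.
by apply: eq_bigr => e _; rewrite mulrCA.
Qed.

Lemma dot_eq S S' U : dot (cmax S S') (cv U) = dot (cmax S S') (cv S) ->
  forall e, e \in E -> cb S e = cb S' e -> cb U e = cb S e.
Proof.
move=> H e He Hb; apply: (term_eq (S' := S')) => //.
have H0 : \sum_e (cmax S S' e * cv S e - cmax S S' e * cv U e) = 0.
  by rewrite sumrB -/(dot _ _) -/(dot _ _) H subrr.
have Hnn : forall i, predT i -> 0 <= cmax S S' i * cv S i - cmax S S' i * cv U i.
  by move=> i _; rewrite subr_ge0 term_le.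
have := psumr_eq0P Hnn H0 (i := e) isT.
by move/eqP; rewrite subr_eq0 => /eqP ->.
Qed.

Lemma dot_S' S S' : dot (cmax S S') (cv S') = dot (cmax S S') (cv S).
Proof.
apply: eq_bigr => e _; rewrite !ffunE /cb.
case: (e \in E) => /=; case: (#|e :&: S| == 1%N); case: (#|e :&: S'| == 1%N) => /=; rewrite ?mulr0 ?mulr1 ?mul0r //.

Qed.

Lemma sum_if1 (S : {set T}) (a : R) (F : {set T} -> R) :
  \sum_U (if U == S then a else 0) * F U = a * F S.
Proof.
rewrite (bigD1 S) //= eqxx big1 ?addr0 // => U /negbTE ->; by rewrite mul0r.
Qed.

Lemma face_lemma (S S' : {set T}) (F : point -> Prop) :
  (forall U, (forall e, e \in E -> cb S e = cb S' e -> cb U e = cb S e) ->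
      cv U = cv S \/ cv U = cv S') ->
  (forall x, F x <-> segment (cv S) (cv S') x) ->
  is_face E F.
Proof.
move=> Hc HF.
set c := cmax S S'; set d := dot c (cv S).
have Hle : forall U, dot c (cv U) <= d by move=> U; apply: ler_sum => e _; apply: term_le.
exists c, d; split.
  move=> x [w [w0 [w1 Hx]]]; rewrite (dot_cut c Hx).
  apply: (@le_trans _ _ (\sum_S0 w S0 * d)).
    by apply: ler_sum => U _; apply: ler_wpM2l.
  by rewrite -mulr_suml w1 mul1r.
move=> x; rewrite HF; split.
  move=> [t [t0 [t1 Hx]]]; split.
    exists [ffun U => (if U == S then 1 - t else 0) + (if U == S' then t else 0)].
    split; [|split].
    - move=> U; rewrite ffunE; apply: addr_ge0; case: ifP => _ //; lra.
    - under eq_bigr do rewrite ffunE.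
      rewrite big_split /=.
      have E1 : forall (S0 : {set T}) (a : R), \sum_U (if U == S0 then a else 0) = a.
        move=> S0 a; rewrite (bigD1 S0) //= eqxx big1 ?addr0 // => U /negbTE -> //.
      rewrite !E1; lra.
    - move=> e; under eq_bigr do rewrite ffunE mulrDl.
      by rewrite big_split /= !sum_if1 Hx.
  rewrite /dot; under eq_bigr => e _ do rewrite Hx mulrDr mulrCA [c e * (t * _)]mulrCA.
  rewrite big_split /= -!mulr_sumr -/(dot c (cv S)) -/(dot c (cv S')) dot_S' -/d.
  by rewrite mulrBl mul1r subrK.
move=> [[w [w0 [w1 Hx]]] Hd].
have Hsupp : forall U, w U != 0 -> cv U = cv S \/ cv U = cv S'.
  move=> U wU; apply: Hc; apply: (dot_eq (S' := S')); apply/eqP; rewrite -/c -/d.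
  have H0 : \sum_U0 w U0 * (d - dot c (cv U0)) = 0.
    under eq_bigr do rewrite mulrBr.
    by rewrite sumrB -mulr_suml w1 mul1r -(dot_cut c Hx) Hd subrr.
  have Hnn : forall i, predT i -> 0 <= w i * (d - dot c (cv i)).
    by move=> i _; apply: mulr_ge0 => //; rewrite subr_ge0.
  have := psumr_eq0P Hnn H0 (i := U) isT.
  move/eqP; rewrite mulf_eq0 (negbTE wU) /= subr_eq0 => /eqP <-; exact: eqxx.
pose t := \sum_(U | cv U == cv S') w U.
have Hsum : t + \sum_(U | cv U != cv S') w U = 1 by rewrite -w1 [RHS](bigID (fun U => cv U == cv S')).
have t0 : 0 <= t by apply: sumr_ge0.
have r0 : 0 <= \sum_(U | cv U != cv S') w U by apply: sumr_ge0.
exists t; split; [done|split; first lra].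
move=> e; rewrite Hx (bigID (fun U => cv U == cv S')) /=.
have -> : \sum_(U | cv U == cv S') w U * cv U e = t * cv S' e.
  by rewrite mulr_suml; apply: eq_bigr => U /eqP ->.
have -> : \sum_(U | cv U != cv S') w U * cv U e = (1 - t) * cv S e.
  have -> : 1 - t = \sum_(U | cv U != cv S') w U by lra.
  rewrite mulr_suml; apply: eq_bigr => U HU.
  have [->|wU] := eqVneq (w U) 0; first by rewrite !mul0r.
  case: (Hsupp U wU) => HH; first by rewrite HH.
  by rewrite HH eqxx in HU.
by rewrite addrC.
Qed.

Lemma vertex_cv S : is_vertex E (cv S).
Proof.
apply: (face_lemma (S := S) (S' := S)).
  move=> U H; left; apply/ffunP => e; rewrite !cvE.
  case He: (e \in E); first by rewrite (H e He erefl).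
  by rewrite /cb He.
move=> x; split.
  move=> ->; exists 0; split; [done|split; first lra].
  by move=> e; rewrite subr0 mul1r mul0r addr0.
move=> [t [_ [_ Hx]]]; apply/ffunP => e; by rewrite Hx mulrBl mul1r subrK.
Qed.

End Gen.

Section Multi.
Variables (R : realFieldType) (T : finType) (k : nat) (p : T -> 'I_k).
Local Open Scope ring_scope.
Local Notation E := (multipartite_edges p).
Local Notation cv := (@cutvec R T E).

Lemma pair_in x y : p x != p y -> [set x; y] \in E.
Proof.
by move=> h; rewrite inE; apply/existsP; exists x; apply/existsP; exists y; rewrite h eqxx.
Qed.

Lemma cb_pair x y Z : p x != p y -> cb E Z [set x; y] = ((x \in Z) != (y \in Z)).
Proof.
move=> hxy; have xy : x != y by apply: contraNneq hxy => ->.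
rewrite /cb pair_in //=.
case hx: (x \in Z); case hy: (y \in Z) => /=.
- have -> : [set x; y] :&: Z = [set x; y].
    by apply/setIidPl/subsetP => z; rewrite !inE => /orP[]/eqP->.
  by rewrite cards2 xy.
- have -> : [set x; y] :&: Z = [set x].
    apply/setP => z; rewrite !inE; case: (eqVneq z x) => [->|] /=; first by rewrite hx.
    by case: (eqVneq z y) => [->|] //=; rewrite hy andbF.
  by rewrite cards1.
- have -> : [set x; y] :&: Z = [set y].
    apply/setP => z; rewrite !inE; case: (eqVneq z y) => [->|] /=; first by rewrite hy orbT.
    by case: (eqVneq z x) => [->|] //=; rewrite hx.
  by rewrite cards1.
- have -> : [set x; y] :&: Z = set0.
    apply/setP => z; rewrite !inE; case: (eqVneq z y) => [->|] /=; first by rewrite hy andbF.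
    by case: (eqVneq z x) => [->|] //=; rewrite hx.
  by rewrite cards0.
Qed.

Lemma cbE e : e \in E -> exists x y, p x != p y /\ e = [set x; y].
Proof.
rewrite inE => /existsP[x /existsP[y /andP[h /eqP ->]]]; by exists x, y.
Qed.

Lemma cv_xor (U Z : {set T}) b : (forall z, (z \in U) = (z \in Z) (+) b) -> cv U = cv Z.
Proof.
move=> H; apply/ffunP => e; rewrite !cvE.
case He: (e \in E); last by rewrite /cb He.
have [x [y [h ->]]] := cbE He.
by rewrite !cb_pair // !H; clear H; case: (x \in Z); case: (y \in Z); case: b.
Qed.

Lemma const_lemma (g h : T -> bool) a1 b1 a0 b0 :
  h a1 -> h b1 -> p a1 != p b1 -> ~~ h a0 -> ~~ h b0 -> p a0 != p b0 ->
  (forall x y, p x != p y -> h x = h y -> g x = g y) ->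
  forall z, g z = if h z then g a1 else g a0.
Proof.
move=> ha1 hb1 p1 ha0 hb0 p0 H z.
have e1 : g a1 = g b1 by apply: H; rewrite // ha1 hb1.
have e0 : g a0 = g b0 by apply: H; rewrite // (negbTE ha0) (negbTE hb0).
case hz: (h z).
  case: (eqVneq (p z) (p b1)) => hp.
    apply: H; first by rewrite hp eq_sym. by rewrite hz ha1.
  by rewrite e1; apply: H => //; rewrite hz hb1.
case: (eqVneq (p z) (p b0)) => hp.
  apply: H; first by rewrite hp eq_sym. by rewrite hz (negbTE ha0).
by rewrite e0; apply: H => //; rewrite hz (negbTE hb0).
Qed.

End Multi.

Lemma bool6 : forall a b c d e f : bool,
  (((a != b) = (c != d)) -> ((e != f) = (a != b))) -> (a (+) c = b (+) d) -> e (+) a = f (+) b.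
Proof.
move=> [] [] [] [] [] [] /= H; try done; try (by move=> _; apply: H); try (by move=> _; have := H erefl).
all: by move=> _; symmetry; apply: H.
Qed.

Lemma clique (R : realFieldType) (T : finType) (k : nat) (p : T -> 'I_k)
  (i0 i1 : 'I_k) (hi : i0 != i1) (m : nat) (a b : nat -> T)
  (ha : forall j, (j <= m)%N -> p (a j) = i0)
  (hb : forall j, (j <= m)%N -> p (b j) = i1)
  (ainj : forall i j, (i <= m)%N -> (j <= m)%N -> a i = a j -> i = j)
  (binj : forall i j, (i <= m)%N -> (j <= m)%N -> b i = b j -> i = j) :
  @skeleton_clique_ge R T (multipartite_edges p) (2 ^ m)%N.
Proof.
pose SX (X : {set 'I_m}) :=
  [set z | [exists j : 'I_m, (j \in X) && ((z == a j.+1) || (z == b j.+1))]].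
have hab : forall i j, (i <= m)%N -> (j <= m)%N -> p (a i) != p (b j).
  by move=> i j hi' hj; rewrite ha // hb.
have memA : forall X (j : 'I_m), (a j.+1 \in SX X) = (j \in X).
  move=> X j; rewrite inE; apply/existsP/idP => [[j' /andP[Hj /orP[/eqP E|/eqP E]]]|Hj].
  - have : j.+1 = j'.+1 by apply: ainj => //; apply: ltn_ord.
    by move/succn_inj => HH; have -> : j = j' by apply: val_inj.
  - by move: (hab j.+1 j'.+1 (ltn_ord j) (ltn_ord j')); rewrite E eqxx.
  - by exists j; rewrite Hj eqxx.
have memB : forall X (j : 'I_m), (b j.+1 \in SX X) = (j \in X).
  move=> X j; rewrite inE; apply/existsP/idP => [[j' /andP[Hj /orP[/eqP E|/eqP E]]]|Hj].
  - by move: (hab j'.+1 j.+1 (ltn_ord j') (ltn_ord j)); rewrite E eqxx.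
  - have : j.+1 = j'.+1 by apply: binj => //; apply: ltn_ord.
    by move/succn_inj => HH; have -> : j = j' by apply: val_inj.
  - by exists j; rewrite Hj eqxx orbT.
have memA0 : forall X, (a 0 \in SX X) = false.
  move=> X; rewrite inE; apply/existsP => [[j' /andP[Hj /orP[/eqP E|/eqP E]]]].
  - by have := ainj 0 j'.+1 (leq0n _) (ltn_ord j') E.
  - by move: (hab 0 j'.+1 (leq0n _) (ltn_ord j')); rewrite E eqxx.
have memB0 : forall X, (b 0 \in SX X) = false.
  move=> X; rewrite inE; apply/existsP => [[j' /andP[Hj /orP[/eqP E|/eqP E]]]].
  - by move: (hab j'.+1 0 (ltn_ord j') (leq0n _)); rewrite E eqxx.
  - by have := binj 0 j'.+1 (leq0n _) (ltn_ord j') E.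
have hab00 : p (a 0) != p (b 0) by apply: hab.
exists [seq cutvec R (multipartite_edges p) (SX X) | X <- enum (powerset [set: 'I_m])].
split.
- rewrite map_inj_uniq ?enum_uniq // => X X' Heq; apply/setP => j.
  have := congr1 (fun f : {ffun {set T} -> R} => f [set a j.+1; b 0]) Heq.
  rewrite /= !cvE !cb_pair ?hab ?memA ?memB0 //. all: try (by apply: hab => //; apply: ltn_ord).
  case: (j \in X); case: (j \in X') => //= /eqP; rewrite ?oner_eq0 // eq_sym oner_eq0 //.
- by rewrite size_map -cardE card_powerset cardsT card_ord.
- by move=> v /mapP[X _ ->]; apply: vertex_cv.
move=> u w /mapP[X _ ->] /mapP[X' _ ->] Hne.
split; [exact: vertex_cv | exact: vertex_cv | done |].
apply: (face_lemma (S := SX X) (S' := SX X')); last by [].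
move=> U HU.
case: (pickP (fun j => (j \in X) != (j \in X'))) => [j0 Hj0|Hall]; last first.
  exfalso; apply: Hne; congr cutvec; congr SX; apply/setP => j.
  by have := Hall j => /= /negbT /negPn /eqP.
pose h z := (z \in SX X) (+) (z \in SX X').
pose g z := (z \in U) (+) (z \in SX X).
have Hg := @const_lemma T k p g h (a j0.+1) (b j0.+1) (a 0) (b 0).
have := Hg.
rewrite /h !memA !memB !memA0 !memB0 /= => Hg'.
have {Hg Hg'} Hg := Hg' (ltac:(by move: Hj0; case: (j0 \in X); case: (j0 \in X')))
  (ltac:(by move: Hj0; case: (j0 \in X); case: (j0 \in X')))
  (hab _ _ (ltn_ord j0) (ltn_ord j0)) isT isT hab00.
have Hgh : forall x y, p x != p y -> h x = h y -> g x = g y.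
  move=> x y hxy; have := HU [set x; y] (pair_in hxy); rewrite !cb_pair //.
  rewrite /h /g; exact: bool6.
have key : forall z, (z \in U) = (z \in SX X) (+) (if h z then g (a j0.+1) else g (a 0)).
  move=> z; have := Hg Hgh z; rewrite /g.
  set I := (if h z then _ else _).
  by case: (z \in U); case: (z \in SX X); case: I.
case: (eqVneq (g (a j0.+1)) (g (a 0))) => Hc.
  left; apply: (@cv_xor R T k p U (SX X) (g (a 0))) => z; rewrite key Hc; by case: (h z).
right; apply: (@cv_xor R T k p U (SX X') (g (a 0))) => z; rewrite key /h.
move: Hc; case: (g (a j0.+1)); case: (g (a 0)); case: (z \in SX X); by case: (z \in SX X').
Qed.

Theorem theorem12 (R : realFieldType) (T : finType) (k : nat) (hk : 1 < k)
  (p : T -> 'I_k) (n : 'I_k -> nat)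
  (hn : forall i : 'I_k, #|[set x | p x == i]| = n i)
  (hmono : forall i j : 'I_k, (i <= j)%N -> (n j <= n i)%N)
  (hpos : forall i : 'I_k, (1 <= n i)%N) :
  @skeleton_clique_ge R T (multipartite_edges p)
    (2 ^ (n (Ordinal hk) - 1))%N.
Proof.
set i1 := Ordinal hk.
pose i0 : 'I_k := Ordinal (ltnW hk).
have hi : i0 != i1 by [].
have h10 : (n i1 <= n i0)%N by apply: hmono.
have : (0 < #|[set x | p x == i1]|)%N by rewrite hn hpos.
move=> /card_gt0P [x0 _].
pose s0 := enum [set x | p x == i0]; pose s1 := enum [set x | p x == i1].
have sz0 : size s0 = n i0 by rewrite -cardE hn.
have sz1 : size s1 = n i1 by rewrite -cardE hn.
have lt1 : forall j, (j <= n i1 - 1)%N -> (j < n i1)%N.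
  move=> j hj; have := hpos i1; lia.
apply: (@clique R T k p i0 i1 hi _ (fun j => nth x0 s0 j) (fun j => nth x0 s1 j)).
- move=> j hj; have : nth x0 s0 j \in s0 by apply: mem_nth; rewrite sz0; apply: leq_trans h10; exact: lt1.
  by rewrite mem_enum inE => /eqP.
- move=> j hj; have : nth x0 s1 j \in s1 by apply: mem_nth; rewrite sz1; exact: lt1.
  by rewrite mem_enum inE => /eqP.
- move=> i j hi' hj /eqP; rewrite nth_uniq ?enum_uniq ?sz0; first by move/eqP.
  all: try (apply: leq_trans h10; exact: lt1). all: try done.
- move=> i j hi' hj /eqP; rewrite nth_uniq ?enum_uniq ?sz1; first by move/eqP.
  all: first [done | by apply: lt1 | idtac].
Qed.
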